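(* Let $P$ and $P'$ be paths in $T$ such that $P$ is a subpath of $P'$ (i.e. the vertex set of $P$ is contained in that of $P'$). Then (1) $\overline{T}_1(P')\le\overline{T}_1(P)$ and $\overline{T}_2(P)\le\overline{T}_2(P')$; (2) $\overline{S}(P)\le\overline{S}(P')$ and $\overline{S}^2(P)\le\overline{S}^2(P')$; (3) $\overline{Q}(P)\le\overline{Q}(P')$ (in $[0,+\infty]$).
   Context: Let $T=(V,E)$ be a finite tree with vertex set $V=\{v_1,\dots,v_n\}$ and positive edge lengths; $d(x,y)$ denotes the length of the unique path in $T$ between vertices $x,y$. Each vertex $v_i$ has a demand rate $\lambda_i\ge 0$, with $\lambda=\sum_i\lambda_i>0$, and weight $w_i=\lambda_i/\lambda$; $w(T)=\sum_i w_i=1$. A path $P$ is the vertex sequence $p(1),\dots,p(k)$ of a simple path in $T$ (a single vertex is allowed); $|P|=d(p(1),p(k))$, and $d(P,v)=\min_j d(p(j),v)$. For $v\in V$, $p_P(v)$ denotes the unique vertex of $P$ closest to $v$. For a vertex $p$ of $P$, the branch $T_p$ (with respect to $P$) is the set of vertices $v$ with $p_P(v)=p$, and $w_{T_p}=\sum_{v_i\in T_p}w_i$. For a vertex $p$ of $P$ put $\overline{d}_P(p)=\sum_{j=1}^k w_{T_{p(j)}}\,d(p(j),p)$. Fix a speed $v_t>0$, constants $G_i\ge 0$ ($i=1,\dots,n$) and a constant $\overline{G}\ge 0$. Define $\overline{T}_1(P)=\frac{1}{v_t}\sum_i w_i\,d(P,v_i)$, $\overline{T}_2(P)=\frac{1}{v_t}\sum_i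 w_i\,\overline{d}_P(p_P(v_i))$, $\overline{S}(P)=\overline{T}_2(P)+\overline{G}$, $s_i(P)=\frac{1}{v_t}\bigl(\overline{d}_P(p_P(v_i))+G_i\bigr)$, $\overline{S}^2(P)=\sum_i w_i\,s_i(P)^2$, and $\overline{Q}(P)=\dfrac{\lambda\,\overline{S}^2(P)}{2(1-\lambda\overline{S}(P))}$ if $\lambda\overline{S}(P)<1$, $\overline{Q}(P)=+\infty$ otherwise. *)

(* Defs.v *)
From HB Require Import structures.
From mathcomp Require Import all_boot all_order all_algebra.
From Stdlib Require Import ClassicalEpsilon.
Set Implicit Arguments. Unset Strict Implicit. Unset Printing Implicit Defensive.
Import Order.TTheory GRing.Theory Num.Theory.
Local Open Scope ring_scope.

Section TreeQueue.
Variable R : realFieldType.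
Variable V : finType.
Variable e : rel V.
Variable len : V -> V -> R.

Definition spath (x y : V) (p : seq V) : bool :=
  [&& path e x p, uniq (x :: p) & last x p == y].

Definition is_tree : Prop :=
  symmetric e /\ irreflexive e /\
  (forall x y : V, exists! p : seq V, spath x y p).

Definition pos_lengths : Prop :=
  (forall x y, len x y = len y x) /\ (forall x y, e x y -> 0 < len x y).

Definition plen (x : V) (p : seq V) : R := \sum_(k <- pairmap len x p) k.

Definition dist (x y : V) : R :=
  plen x (epsilon (inhabits [::]) (fun p => spath x y p)).

Definition is_tpath (P : seq V) : bool :=
  if P is x :: p then path e x p && uniq P else false.

Definition distP (P : seq V) (v : V) : R :=
  \big[Num.min/dist (head v P) v]_(q <- P) dist q v.

Definition projP (P : seq V) (v : V) : V :=
  [arg min_(q < head v P | q \in P) dist q v]%O.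

Variable lam : V -> R.
Definition lamT : R := \sum_(v : V) lam v.
Definition wt (v : V) : R := lam v / lamT.

(* w_{T_p}: weight of the branch T_p w.r.t. P *)
Definition wbranch (P : seq V) (p : V) : R :=
  \sum_(v : V | projP P v == p) wt v.

Definition dbar (P : seq V) (p : V) : R :=
  \sum_(q <- P) wbranch P q * dist q p.

Variables (vt : R) (G : V -> R) (Gbar : R).

Definition T1 (P : seq V) : R := vt^-1 * \sum_(v : V) wt v * distP P v.
Definition T2 (P : seq V) : R := vt^-1 * \sum_(v : V) wt v * dbar P (projP P v).
Definition Sbar (P : seq V) : R := T2 P + Gbar.
Definition si (P : seq V) (v : V) : R := vt^-1 * (dbar P (projP P v) + G v).
Definition S2bar (P : seq V) : R := \sum_(v : V) wt v * si P v ^+ 2.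

(* values in [0, +oo]: None stands for +oo *)
Definition Qbar (P : seq V) : option R :=
  if lamT * Sbar P < 1 then Some (lamT * S2bar P / (2 * (1 - lamT * Sbar P)))
  else None.

End TreeQueue.

(* order on R extended by +oo (None) *)
Definition le_ext (R : realFieldType) (a b : option R) : bool :=
  match a, b with
  | _, None => true
  | None, Some _ => false
  | Some x, Some y => x <= y
  end.

(* Main.v *)
Require Import Defs.
From HB Require Import structures.
From mathcomp Require Import all_boot all_order all_algebra lra.
From Stdlib Require Import ClassicalEpsilon.
Set Implicit Arguments. Unset Strict Implicit. Unset Printing Implicit Defensive.
Import Order.TTheory GRing.Theory Num.Theory.
Local Open Scope ring_scope.

Section Graph.
Variables (R : realFieldType) (V : finType) (e : rel V) (len : V -> V -> R).
Hypothesis tree : is_tree e.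
Hypothesis pl : pos_lengths e len.

Notation plen := (plen len).
Notation dist := (dist e len).

Lemma plen_nil x : plen x [::] = 0.
Proof. by rewrite /Defs.plen big_nil. Qed.

Lemma plen_cons x y p : plen x (y :: p) = len x y + plen y p.
Proof. by rewrite /Defs.plen /= big_cons. Qed.

Lemma plen_cat x p q : plen x (p ++ q) = plen x p + plen (last x p) q.
Proof. by rewrite /Defs.plen pairmap_cat big_cat. Qed.

Lemma plen_rcons x p z : plen x (rcons p z) = plen x p + len (last x p) z.
Proof. by rewrite -cats1 plen_cat plen_cons plen_nil addr0. Qed.

Lemma plen_ge0 x p : path e x p -> 0 <= plen x p.
Proof.
elim: p x => [|y p IH] x /=; first by rewrite plen_nil.
case/andP=> hxy hp; rewrite plen_cons addr_ge0 ?IH //.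
exact: ltW (pl.2 _ _ hxy).
Qed.

Lemma plen_gt0 x y p : path e x (y :: p) -> 0 < plen x (y :: p).
Proof.
move=> /= /andP [hxy hp]; rewrite plen_cons ltr_pwDl ?plen_ge0 //.
exact: pl.2.
Qed.

Lemma dist_spec x y p : spath e x y p -> dist x y = plen x p.
Proof.
move=> hp; have [p0 [h0 hu]] := tree.2.2 x y.
have ex : exists q, spath e x y q by exists p.
have := epsilon_spec (inhabits [::]) _ ex => hq.
rewrite /Defs.dist; congr (plen x _).
by rewrite -(hu _ hq) (hu _ hp).
Qed.

Lemma dist_ge0 x y : 0 <= dist x y.
Proof.
have [p [h0 _]] := tree.2.2 x y.
by rewrite (dist_spec h0); apply: plen_ge0; case/and3P: h0.
Qed.

Lemma dist_xx x : dist x x = 0.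
Proof.
have h : spath e x x [::] by rewrite /spath /= eqxx.
by rewrite (dist_spec h) plen_nil.
Qed.

Lemma dist_eq0 x y : dist x y = 0 -> x = y.
Proof.
have [[|z p] [h0 _]] := tree.2.2 x y; rewrite (dist_spec h0).
  by case/and3P: h0 => _ _ /eqP.
case/and3P: h0 => hp _ _ h; have := plen_gt0 hp; by rewrite h ltxx.
Qed.

Lemma last_rev_belast (x : V) p : last (last x p) (rev (belast x p)) = x.
Proof.
elim: p x => [|y p IH] x //=.
by rewrite rev_cons last_rcons.
Qed.

Lemma plen_rev x p : plen (last x p) (rev (belast x p)) = plen x p.
Proof.
elim: p x => [|y p IH] x /=; first by [].
rewrite rev_cons plen_rcons IH last_rev_belast plen_cons addrC.
by rewrite (pl.1 y x).
Qed.

Lemma spath_rev x y p : spath e x y p ->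
  spath e y x (rev (belast x p)) /\ y :: rev (belast x p) = rev (x :: p).
Proof.
case/and3P=> hp hu /eqP hl.
have E : y :: rev (belast x p) = rev (x :: p) by rewrite [x :: p]lastI rev_rcons hl.
split=> //; apply/and3P; split.
- rewrite -hl rev_path.
  by rewrite (eq_path (e' := e)) // => a b; rewrite (tree.1 b a).
- by rewrite E rev_uniq.
- by rewrite -hl last_rev_belast.
Qed.

Lemma dist_sym x y : dist x y = dist y x.
Proof.
have [p [h0 _]] := tree.2.2 x y.
have [h1 _] := spath_rev h0.
rewrite (dist_spec h0) (dist_spec h1).
case/and3P: h0 => _ _ /eqP <-; by rewrite plen_rev.
Qed.

Lemma spath_split x y s1 g s2 : spath e x y (s1 ++ g :: s2) ->
  spath e x g (rcons s1 g) /\ spath e g y s2.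
Proof.
case/and3P=> hp hu hl.
have hu' : uniq ((x :: s1) ++ g :: s2) by [].
rewrite cat_uniq in hu'; case/and3P: hu' => hu1 hh hu2.
move: hp; rewrite cat_path /= => /and3P [hp1 hg hp2].
split; apply/and3P; split=> //.
- by rewrite rcons_path hp1.
- rewrite -rcons_cons rcons_uniq hu1 andbT.
  by move: hh; apply: contra => hh; rewrite /= hh.
- by rewrite last_rcons.
- by move: hl; rewrite last_cat.
Qed.

Lemma dist_split x y s1 g s2 : spath e x y (s1 ++ g :: s2) ->
  dist x y = dist x g + dist g y.
Proof.
move=> h; have [h1 h2] := spath_split h.
rewrite (dist_spec h) (dist_spec h1) (dist_spec h2) -cat_rcons plen_cat.
by rewrite last_rcons.
Qed.

Lemma mem_split (T : eqType) (a : T) (s : seq T) : a \in s ->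
  exists s1 s2, s = s1 ++ a :: s2.
Proof.
elim: s => [|b s IH] //=; rewrite inE => /orP [/eqP -> | h].
  by exists [::], s.
by have [s1 [s2 ->]] := IH h; exists (b :: s1), s2.
Qed.

Lemma seg_fwd s1 a s2 b s3 :
  sorted e (s1 ++ a :: s2 ++ b :: s3) -> uniq (s1 ++ a :: s2 ++ b :: s3) ->
  spath e a b (rcons s2 b) /\
  {subset a :: rcons s2 b <= s1 ++ a :: s2 ++ b :: s3}.
Proof.
move=> hs hu; split; last first.
  move=> z; rewrite !(inE, mem_cat, mem_rcons).
  by move=> /orP[->|/orP[->|->]]; rewrite ?orbT.
have E : s1 ++ a :: s2 ++ b :: s3 = s1 ++ ((a :: rcons s2 b) ++ s3).
  by rewrite cat_cons cat_rcons.
rewrite E in hs hu.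
have [_ /cat_sorted2 [hs1 _]] := cat_sorted2 hs.
rewrite !cat_uniq in hu; case/and3P: hu => _ _ /and3P [hu _ _].
by apply/and3P; split => //; rewrite last_rcons.
Qed.

Lemma tpath_sorted P : is_tpath e P -> [/\ sorted e P, uniq P & P != [::]].
Proof. by case: P => [|x p] //= /andP [h1 h2]. Qed.

Lemma seg P a b : is_tpath e P -> a \in P -> b \in P ->
  exists t, spath e a b t /\ {subset a :: t <= P}.
Proof.
move=> /tpath_sorted [hs hu _] ha hb.
have [s1 [s2 E]] := mem_split ha; subst P.
move: hb; rewrite mem_cat inE => /orP [hb | /orP [/eqP -> | hb]].
- have [s5 [s6 E]] := mem_split hb; subst s1.
  have E2 : (s5 ++ b :: s6) ++ a :: s2 = s5 ++ b :: s6 ++ a :: s2.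
    by rewrite -catA.
  rewrite E2 in hs hu *.
  have [h1 h2] := seg_fwd hs hu.
  have [h3 h4] := spath_rev h1.
  exists (rev (belast b (rcons s6 a))); split => // z.
  by rewrite h4 mem_rev => /h2.
- exists [::]; split; first by rewrite /spath /= eqxx.
  by move=> z; rewrite mem_seq1 => /eqP ->; rewrite mem_cat inE eqxx orbT.
- have [s3 [s4 E]] := mem_split hb; subst s2.
  have [h1 h2] := seg_fwd hs hu.
  by exists (rcons s3 b).
Qed.

Lemma last_split (T : eqType) (P : pred T) (w : seq T) : has P w ->
  exists w1 g w2, [/\ w = w1 ++ g :: w2, P g & ~~ has P w2].
Proof.
elim: w => [|y w IH] //=; case: (boolP (has P w)) => [h _ | h].
  by have [w1 [g [w2 [-> h1 h2]]]] := IH h; exists (y :: w1), g, w2.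
rewrite orbF => hy; by exists [::], y, w.
Qed.

Definition gate (P : seq V) v g :=
  g \in P /\ forall q, q \in P -> dist q v = dist q g + dist g v.

Lemma gate_ex P v : is_tpath e P -> exists g, gate P v g.
Proof.
move=> hP; have [hs hu hn] := tpath_sorted hP.
case: P hP hs hu hn => [|x p] // hP hs hu _.
have [s [hsp _]] := tree.2.2 x v.
have hh : has (mem (x :: p)) (x :: s) by rewrite /= inE eqxx.
have [w1 [g [w2 [E hg hw2]]]] := last_split hh.
have hsp' := hsp; case/and3P: hsp' => hp1 hu1 hl1.
have hsuf : spath e g v w2.
  apply/and3P; split.
  - have : sorted e (x :: s) by [].
    by rewrite E => /cat_sorted2 [_].
  - by move: hu1; rewrite E cat_uniq => /and3P [_ _].
  - move: hl1; have -> : last x s = last x (x :: s) by [].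
    by rewrite E last_cat.
exists g; split => // q hq.
have [t [ht hsub]] := seg hP hq hg.
case/and3P: ht => htp htu /eqP htl.
have hcat : spath e q v (t ++ w2).
  case/and3P: hsuf => hwp hwu /eqP hwl.
  apply/and3P; split.
  - by rewrite cat_path htp htl.
  - rewrite -cat_cons cat_uniq htu /=.
    apply/andP; split; last by move: hwu; case/andP.
    apply/hasPn => z hz; apply/negP => /hsub hzP.
    by move/hasPn: hw2 => /(_ z hz); rewrite /= hzP.
  - by rewrite last_cat htl hwl.
rewrite (dist_spec hcat) plen_cat htl.
by rewrite (dist_spec hsuf) (dist_spec (introT and3P (And3 htp htu (introT eqP htl)))).
Qed.

Lemma gate_uniq P v g1 g2 : gate P v g1 -> gate P v g2 -> g1 = g2.
Proof.
move=> [h1 e1] [h2 e2]; have := e1 _ h2; have := e2 _ h1.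
have := dist_ge0 g1 g2; have := dist_ge0 g2 g1 => p1 p2 q1 q2.
apply: dist_eq0; lra.
Qed.

Lemma proj_gate P v : is_tpath e P -> gate P v (projP e len P v).
Proof.
move=> hP; have hd : head v P \in P by case: P hP => // x p _; rewrite inE eqxx.
have [g0 [hg0 eg0]] := gate_ex v hP.
rewrite /projP; case: (arg_minP (fun q => dist q v) hd) => g hg hmin.
suff -> : g = g0 by [].
have := hmin _ hg0; have := eg0 _ hg; have := dist_ge0 g g0 => a b c.
apply: dist_eq0; lra.
Qed.

Lemma dist_tri a b c : dist a c <= dist a b + dist b c.
Proof.
have [t [ht _]] := tree.2.2 a b.
have hQ : is_tpath e (a :: t) by case/and3P: ht => h1 h2 _; apply/andP; split.
have [g [hg eg]] := gate_ex c hQ.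
have hb : b \in a :: t by case/and3P: ht => _ _ /eqP <-; exact: mem_last.
have hab : dist a b = dist a g + dist g b.
  move: hg; rewrite inE => /orP [/eqP -> | hg]; first by rewrite dist_xx add0r.
  have [s1 [s2 E]] := mem_split hg; subst t; exact: dist_split ht.
have := eg _ hb; have := eg _ (mem_head a t); have := dist_ge0 b g.
rewrite (dist_sym b g) => *; lra.
Qed.

Lemma gate_lip P x y gx gy : gate P x gx -> gate P y gy ->
  dist gx gy <= dist x y.
Proof.
move=> [hx ex] [hy ey].
have := ex _ hy; have := ey _ hx; have := dist_tri gy y x; have := dist_tri gx x y.
rewrite (dist_sym gy gx) (dist_sym y x) => *; lra.
Qed.

Lemma gate_comp P P' v g' g : {subset P <= P'} ->
  gate P' v g' -> gate P g' g -> gate P v g.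
Proof.
move=> sub [h' e'] [h eg]; split => // q hq.
rewrite (e' _ (sub _ hq)) (eg _ hq) (e' _ (sub _ h)); lra.
Qed.

Lemma bigmin_ge (s : seq V) (F : V -> R) idx m :
  m <= idx -> (forall q, q \in s -> m <= F q) ->
  m <= \big[Num.min/idx]_(q <- s) F q.
Proof.
elim: s => [|y s IH] hi hF; first by rewrite big_nil.
rewrite big_cons le_min hF ?mem_head // IH // => q hq.
by apply: hF; rewrite inE hq orbT.
Qed.

Lemma bigmin_le (s : seq V) (F : V -> R) idx x :
  x \in s -> \big[Num.min/idx]_(q <- s) F q <= F x.
Proof.
elim: s => [|y s IH] //; rewrite inE big_cons ge_min => /orP [/eqP -> | h].
  by rewrite lexx.
by rewrite IH ?orbT.
Qed.

Lemma distP_proj P v : is_tpath e P -> distP e len P v = dist (projP e len P v) v.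
Proof.
move=> hP; have [hg eg] := proj_gate v hP.
have hd : head v P \in P by case: P hP {hg eg} => // x p _; rewrite inE eqxx.
apply/eqP; rewrite eq_le; apply/andP; split; first exact: bigmin_le.
apply: bigmin_ge => [|q hq]; rewrite ?(eg _ hd) ?(eg _ hq) lerDr dist_ge0 //.
Qed.

End Graph.

Lemma dbarE (R : realFieldType) (V : finType) (e : rel V) (len : V -> V -> R)
  (lam : V -> R) P p : uniq P -> (forall u, projP e len P u \in P) ->
  dbar e len lam P p = \sum_(u : V) wt lam u * dist e len (projP e len P u) p.
Proof.
move=> hu hin; rewrite /dbar /wbranch.
under eq_bigr do rewrite big_distrl /= big_mkcond /=.
rewrite exchange_big /=; apply: eq_bigr => u _.
rewrite -big_mkcond /= (big_rem (projP e len P u)) // eqxx.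
rewrite big1_seq /=; first by rewrite addr0.
by move=> i /andP [/eqP <-]; rewrite mem_rem_uniqF.
Qed.

Theorem corollary2 (R : realFieldType) (V : finType) (e : rel V)
    (len : V -> V -> R) (lam : V -> R) (vt : R) (G : V -> R) (Gbar : R)
    (P P' : seq V) :
  is_tree e -> pos_lengths e len ->
  (forall v, 0 <= lam v) -> 0 < lamT lam ->
  0 < vt -> (forall v, 0 <= G v) -> 0 <= Gbar ->
  is_tpath e P -> is_tpath e P' -> {subset P <= P'} ->
  (T1 e len lam vt P' <= T1 e len lam vt P /\
   T2 e len lam vt P <= T2 e len lam vt P') /\
  (Sbar e len lam vt Gbar P <= Sbar e len lam vt Gbar P' /\
   S2bar e len lam vt G P <= S2bar e len lam vt G P') /\
  le_ext (Qbar e len lam vt G Gbar P) (Qbar e len lam vt G Gbar P').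
Proof.
move=> tree pl hlam hlamT hvt hG hGbar hP hP' sub.
set pi := projP e len P; set pi' := projP e len P'.
have gP v : gate e len P v (pi v) by exact: proj_gate.
have gP' v : gate e len P' v (pi' v) by exact: proj_gate.
have hwt v : 0 <= wt lam v by rewrite divr_ge0 // ltW.
have hvi : 0 <= vt^-1 by rewrite invr_ge0 ltW.
have comp v : pi v = pi (pi' v).
  apply: (gate_uniq tree pl (gP v)); apply: (gate_comp sub (gP' v)); exact: gP.
have lip u v : dist e len (pi u) (pi v) <= dist e len (pi' u) (pi' v).
  rewrite (comp u) (comp v); exact: (gate_lip tree pl (gP (pi' u)) (gP (pi' v))).
have huP : uniq P by case/tpath_sorted: hP.
have huP' : uniq P' by case/tpath_sorted: hP'.
have dE v : dbar e len lam P (pi v) = \sum_u wt lam u * dist e len (pi u) (pi v).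
  by apply: dbarE => // u; case: (gP u).
have dE' v : dbar e len lam P' (pi' v) = \sum_u wt lam u * dist e len (pi' u) (pi' v).
  by apply: dbarE => // u; case: (gP' u).
have key v : dbar e len lam P (pi v) <= dbar e len lam P' (pi' v).
  rewrite dE dE'; apply: ler_sum => u _; by rewrite ler_wpM2l.
have dge0 v : 0 <= dbar e len lam P (pi v).
  rewrite dE; apply: sumr_ge0 => u _; exact: mulr_ge0 (hwt u) (dist_ge0 tree pl _ _).
have T2le : T2 e len lam vt P <= T2 e len lam vt P'.
  rewrite /T2; apply: ler_wpM2l => //; apply: ler_sum => v _.
  by rewrite ler_wpM2l.
have Sle : Sbar e len lam vt Gbar P <= Sbar e len lam vt Gbar P'.
  by rewrite /Sbar lerD2r.
have sige0 v : 0 <= si e len lam vt G P v.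
  by rewrite /si mulr_ge0 // addr_ge0.
have sile v : si e len lam vt G P v <= si e len lam vt G P' v.
  by rewrite /si ler_wpM2l // lerD2r key.
have S2le : S2bar e len lam vt G P <= S2bar e len lam vt G P'.
  rewrite /S2bar; apply: ler_sum => v _; apply: ler_wpM2l => //.
  by apply: lerXn2r; rewrite ?nnegrE // (le_trans (sige0 v) (sile v)).
have S2ge0 : 0 <= S2bar e len lam vt G P.
  by rewrite /S2bar sumr_ge0 // => v _; rewrite mulr_ge0 // exprn_ge0.
split; [split => // | split; [split => // |]].
- rewrite /T1; apply: ler_wpM2l => //; apply: ler_sum => v _.
  apply: ler_wpM2l => //.
  rewrite !distP_proj //; have [hg _] := gP v; have [_ eg] := gP' v.
  rewrite (eg _ (sub _ hg)) lerDr; exact: dist_ge0.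
- rewrite /Qbar; case h' : (lamT lam * Sbar e len lam vt Gbar P' < 1); last first.
    by case: (lamT lam * Sbar e len lam vt Gbar P < 1).
  have h : lamT lam * Sbar e len lam vt Gbar P < 1.
    by apply: le_lt_trans h'; rewrite ler_wpM2l // ltW.
  rewrite h /=; apply: ler_pM.
  + by rewrite mulr_ge0 // ltW.
  + by rewrite invr_ge0 mulr_ge0 // subr_ge0 ltW.
  + by rewrite ler_wpM2l // ltW.
  + rewrite lef_pV2 ?posrE ?mulr_gt0 ?subr_gt0 //.
    by rewrite ler_wpM2l // lerD2l lerN2 ler_wpM2l // ltW.
Qed.
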